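(* For every marked poset $(P,A,\lambda)$, the marked order polytope $\mathcal{O}_{P,A}(\lambda)$ and the marked chain polytope $\mathcal{C}_{P,A}(\lambda)$ are both normal (lattice) polytopes.
   Context: A marked poset is a triple $(P,A,\lambda)$ where $(P,\prec)$ is a finite poset, $A\subseteq P$ contains all minimal and all maximal elements of $P$, and $\lambda:A\to\mathbb{Z}_{\ge 0}$, $a\mapsto\lambda_a$. The marked order polytope $\mathcal{O}_{P,A}(\lambda)\subset\mathbb{R}^{P\setminus A}$ is the set of $(x_p)_{p\in P\setminus A}$ with $x_p\le x_q$ for $p\prec q$ in $P\setminus A$, $x_p\le\lambda_a$ for $p\prec a$, $a\in A$, and $\lambda_b\le x_q$ for $b\prec q$, $b\in A$. The marked chain polytope $\mathcal{C}_{P,A}(\lambda)\subset\mathbb{R}^{P\setminus A}$ is the set of $(x_p)_{p\in P\setminus A}$ with $x_p\ge0$ for all $p$, and $x_{p_1}+\cdots+x_{p_n}\le\lambda_a-\lambda_b$ for every chain $b\prec p_n\prec\cdots\prec p_1\prec a$ with $n\ge1$, $a,b\in A$, $p_i\in P\setminus A$. A lattice polytope $Q\subset\mathbb{R}^d$ is normal if for every $n\in\mathbb{N}$ the set $nQ\cap\mathbb{Z}^d$ is the $n$-fold Minkowski sum of $Q\cap\mathbb{Z}^d$. *)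

(* Defs.v *)
From HB Require Import structures.
From mathcomp Require Import all_boot all_order all_algebra.
Set Implicit Arguments. Unset Strict Implicit. Unset Printing Implicit Defensive.
Import Order.TTheory GRing.Theory Num.Theory.
Local Open Scope ring_scope.

Section Marked.
Variable R : realFieldType.
Context {disp : Order.disp_t} {P : finPOrderType disp}.

Definition marked_set (A : {set P}) : Prop :=
  forall p : P,
    ((forall q : P, ~~ (q < p)%O) \/ (forall q : P, ~~ (p < q)%O)) -> p \in A.

Definition free_elts (A : {set P}) : finType := {p : P | p \notin A}.

Definition marked_order_polytope (A : {set P}) (lam : P -> nat)
    (x : free_elts A -> R) : Prop :=
  (forall p q : free_elts A, (val p < val q)%O -> x p <= x q) /\
  (forall (p : free_elts A) (a : P), a \in A -> (val p < a)%O -> x p <= (lam a)%:R) /\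
  (forall (p : free_elts A) (b : P), b \in A -> (b < val p)%O -> (lam b)%:R <= x p).

(* Marked chain polytope C_{P,A}(lam) in R^{P \ A}.  A chain
   b < p_n < ... < p_1 < a (n >= 1, p_i not in A) is encoded by the
   nonempty sequence s = [:: p_n; ...; p_1]. *)
Definition marked_chain_polytope (A : {set P}) (lam : P -> nat)
    (x : free_elts A -> R) : Prop :=
  (forall p : free_elts A, 0 <= x p) /\
  (forall (a b : P) (s : seq (free_elts A)),
      a \in A -> b \in A -> s != [::] ->
      path (fun u v : P => (u < v)%O) b (rcons (map val s) a) ->
      \sum_(p <- s) x p <= (lam a)%:R - (lam b)%:R).
End Marked.

Section Polytopes.
Variable R : realFieldType.
Variable D : finType.

Definition lattice_polytope (Q : (D -> R) -> Prop) : Prop :=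
  exists vs : seq (D -> int),
    forall x : D -> R,
      Q x <-> exists c : 'I_(size vs) -> R,
        (forall k, 0 <= c k) /\ \sum_k c k = 1 /\
        forall i, x i = \sum_k c k * ((nth (fun _ => 0) vs k i)%:~R).

Definition normal_polytope (Q : (D -> R) -> Prop) : Prop :=
  forall n : nat, (0 < n)%N ->
    forall z : D -> int,
      (exists q : D -> R, Q q /\ forall i, (z i)%:~R = n%:R * q i) <->
      (exists zs : 'I_n -> D -> int,
          (forall k, Q (fun i => (zs k i)%:~R)) /\
          forall i, z i = \sum_(k < n) zs k i).
End Polytopes.

Arguments marked_order_polytope R {disp P} A lam x.
Arguments marked_chain_polytope R {disp P} A lam x.

(* Main.v *)
Require Import Defs.
From HB Require Import structures.
From mathcomp Require Import all_boot all_order all_algebra.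
From mathcomp Require Import ring lra zify.
From Stdlib Require Import FunctionalExtensionality ClassicalEpsilon.
Import Order.TTheory GRing.Theory Num.Theory.
Lemma hermite n m : (0 < n)%N -> (\sum_(k < n) (m + k) %/ n)%N = m.
Proof.
move=> n0; elim: m => [|m IH].
  by rewrite big1 // => k _; rewrite add0n divn_small.
have E : forall f : nat -> nat,
  (f 0 + \sum_(k < n) f k.+1 = \sum_(k < n) f k + f n)%N.
  by move=> f; rewrite -(big_ord_recl n (fun k : 'I_n.+1 => f k)) big_ord_recr.
have := E (fun k => (m + k) %/ n); rewrite addn0 IH.
have -> : ((m + n) %/ n = m %/ n + 1)%N by rewrite -{1}[n]mul1n divnDMl.
under eq_bigr do rewrite -addSnnS.
move=> h; apply/eqP; rewrite -(eqn_add2l (m %/ n)) h.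
lia.
Qed.

Local Open Scope ring_scope.

Section Main.
Variable R : realFieldType.
Variable disp : Order.disp_t.
Variable P : finPOrderType disp.
Variable A : {set P}.

Local Notation D := (free_elts A).

Definition ext (mu : P -> nat) (x : D -> R) : P -> R :=
  fun p => match @insub _ (fun q => q \notin A) D p with
           | Some u => x u | None => (mu p)%:R end.

Lemma ext_val mu x (u : D) : ext mu x (val u) = x u.
Proof. by rewrite /ext valK. Qed.

Lemma ext_A mu x a : a \in A -> ext mu x a = (mu a)%:R.
Proof. by move=> aA; rewrite /ext insubN // negbK. Qed.

Definition inO (mu : P -> nat) (X : P -> R) : Prop :=
  (forall a, a \in A -> X a = (mu a)%:R) /\
  (forall p q : P, (p < q)%O -> (p \notin A) || (q \notin A) -> X p <= X q).

Lemma orderE mu x :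
  marked_order_polytope R A mu x <-> inO mu (ext mu x).
Proof.
split.
- move=> [H1 [H2 H3]]; split; first by move=> a aA; rewrite ext_A.
  move=> p q pq.
  case pA: (p \in A); case qA: (q \in A) => //= _.
  + have qD : q \notin A by rewrite qA.
    rewrite (ext_A _ _ _ pA) -[q]/(val (Sub q qD : D)) ext_val.
    by apply: H3.
  + have pD : p \notin A by rewrite pA.
    rewrite (ext_A _ _ _ qA) -[p]/(val (Sub p pD : D)) ext_val.
    by apply: H2.
  + have pD : p \notin A by rewrite pA.
    have qD : q \notin A by rewrite qA.
    rewrite -[p]/(val (Sub p pD : D)) -[q]/(val (Sub q qD : D)) !ext_val.
    by apply: H1.
- move=> [H1 H2]; split; [|split].
  + move=> p q pq; rewrite -!(ext_val mu); apply: H2 => //; by rewrite (valP p).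
  + move=> p a aA pa; rewrite -(ext_A mu x _ aA) -(ext_val mu); apply: H2 => //.
    by rewrite (valP p).
  + move=> p b bA bp; rewrite -(ext_A mu x _ bA) -(ext_val mu); apply: H2 => //.
    by rewrite (valP p) orbT.
Qed.
Definition inC (mu : P -> nat) (Y : P -> R) : Prop :=
  (forall p, p \notin A -> 0 <= Y p) /\
  (forall (a b : P) (s : seq P), a \in A -> b \in A -> s != [::] ->
     all (fun p => p \notin A) s -> path (fun u v : P => (u < v)%O) b (rcons s a) ->
     \sum_(p <- s) Y p <= (mu a)%:R - (mu b)%:R).

Lemma lift_seq (s : seq P) : all (fun p => p \notin A) s ->
  exists s' : seq D, map val s' = s.
Proof.
elim: s => [|p s IH] /=; first by exists [::].
move=> /andP[pA /IH [s' Hs']]; exists ((Sub p pA : D) :: s'); by rewrite /= Hs'.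
Qed.

Lemma chainE mu y :
  marked_chain_polytope R A mu y <-> inC mu (ext mu y).
Proof.
split.
- move=> [H1 H2]; split.
  + move=> p pA; rewrite -[p]/(val (Sub p pA : D)) ext_val; exact: H1.
  + move=> a b s aA bA s0 sA pth; have [s' Hs'] := lift_seq _ sA.
    rewrite -Hs' big_map.
    under eq_bigr do rewrite ext_val.
    apply: H2 => //; first by apply: contra_neq s0 => s'0; rewrite -Hs' s'0.
    by rewrite Hs'.
- move=> [H1 H2]; split.
  + by move=> p; rewrite -(ext_val mu); apply: H1; apply: (valP p).
  + move=> a b s aA bA s0 pth.
    have := H2 a b (map val s) aA bA.
    rewrite big_map; under eq_bigr do rewrite ext_val.
    apply => //; first by case: s s0 pth.
    by apply/allP => p /mapP[u _ ->]; apply: (valP u).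
Qed.
Hypothesis HA : marked_set A.

Definition below (p : P) := [set q : P | (q < p)%O].
Definition above (p : P) := [set q : P | (p < q)%O].

Lemma below_lt p q : (q < p)%O -> (#|below q| < #|below p|)%N.
Proof.
move=> qp; apply: proper_card; apply/properP; split.
- by apply/subsetP => r; rewrite !inE => /lt_trans; apply.
- by exists q; rewrite !inE ?ltxx.
Qed.

Lemma above_lt p q : (p < q)%O -> (#|above q| < #|above p|)%N.
Proof.
move=> qp; apply: proper_card; apply/properP; split.
- by apply/subsetP => r; rewrite !inE; apply: lt_trans.
- by exists q; rewrite !inE ?ltxx.
Qed.

Lemma exists_below p : p \notin A -> exists2 b, b \in A & (b < p)%O.
Proof.
move=> pA.
case: (pickP (fun q => (q < p)%O)) => [q0 q0p|none].
- case: (@arg_minnP P q0 (fun q => (q < p)%O) (fun q => #|below q|) q0p) => b bp bmin.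
  exists b => //; apply: HA; left => r; apply/negP => rb.
  have := bmin r (lt_trans rb bp); rewrite leqNgt (below_lt _ _ rb) //.
- by move: pA; rewrite (HA p) //; left => q; rewrite none.
Qed.

Lemma exists_above p : p \notin A -> exists2 a, a \in A & (p < a)%O.
Proof.
move=> pA.
case: (pickP (fun q => (p < q)%O)) => [q0 q0p|none].
- case: (@arg_minnP P q0 (fun q => (p < q)%O) (fun q => #|above q|) q0p) => b bp bmin.
  exists b => //; apply: HA; right => r; apply/negP => rb.
  have := bmin r (lt_trans bp rb); rewrite leqNgt (above_lt _ _ rb) //.
- by move: pA; rewrite (HA p) //; right => q; rewrite none.
Qed.

Definition bmax (F : P -> R) (p : P) : R := \big[Num.max/0]_(q | (q < p)%O) F q.

Lemma le_bmax F p q : (q < p)%O -> F q <= bmax F p.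
Proof. by move=> qp; rewrite /bmax; apply: le_bigmax_cond. Qed.

Lemma bmax_le F p c : 0 <= c -> (forall q, (q < p)%O -> F q <= c) -> bmax F p <= c.
Proof. by move=> c0 H; apply/bigmax_leP; split. Qed.

Lemma bmax_ge0 F p : 0 <= bmax F p.
Proof. exact: bigmax_ge_id. Qed.

Lemma bmax_eq F p q : (q < p)%O -> 0 <= F q ->
  (forall r, (r < p)%O -> F r <= F q) -> bmax F p = F q.
Proof.
move=> qp F0 H; apply/eqP; rewrite eq_le le_bmax // andbT.
exact: bmax_le.
Qed.

Lemma bmax_arg (F : P -> R) (p q0 : P) : (q0 < p)%O ->
  exists2 q, (q < p)%O & (forall r, (r < p)%O -> F r <= F q).
Proof.
move=> q0p.
case: (@arg_maxP _ R P q0 (fun q => (q < p)%O) F q0p) => q qp qmax.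
by exists q.
Qed.
Definition phi (X : P -> R) (p : P) : R := X p - bmax X p.

Lemma inO_ge0 mu X : inO mu X -> forall p, 0 <= X p.
Proof.
move=> [H1 H2] p; case pA: (p \in A); first by rewrite H1.
have [b bA bp] := exists_below p (negbT pA).
apply: le_trans (H2 b p bp _); last by rewrite pA orbT.
by rewrite H1.
Qed.

Lemma tele mu X : inO mu X -> forall (c : P) (s : seq P),
  path (fun u v : P => (u < v)%O) c s -> all (fun p => p \notin A) s ->
  \sum_(p <- s) phi X p <= X (last c s) - X c.
Proof.
move=> HX c s; elim: s c => [|u s IH] c /=; first by rewrite big_nil subrr.
move=> /andP[cu pth] /andP[uA sA]; rewrite big_cons.
have h1 : phi X u <= X u - X c by rewrite /phi lerD2l lerN2; apply: le_bmax.
apply: le_trans (lerD h1 (IH u pth sA)) _.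
by rewrite addrC addrA subrK.
Qed.

Lemma phi_inC mu X : inO mu X -> inC mu (phi X).
Proof.
move=> HX; have X0 := inO_ge0 _ _ HX; case: HX => [H1 H2]; split.
- move=> p pA; rewrite /phi subr_ge0; apply: bmax_le => // q qp.
  by apply: H2 => //; rewrite pA orbT.
- move=> a b s aA bA s0 sA; rewrite rcons_path => /andP[pth la].
  apply: le_trans (tele _ _ (conj H1 H2) _ _ pth sA) _.
  rewrite (H1 b bA) lerD2r -(H1 a aA); apply: H2 => //.
  apply/orP; left; move: s0 sA {pth la}; case: s => [//|u s] _ /andP[uA sA] /=.
  have := mem_last u s; rewrite inE => /orP[/eqP->//|ls].
  by rewrite (allP sA).
Qed.
Fixpoint psiR (mu : P -> nat) (Y : P -> R) (k : nat) (p : P) : R :=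
  match k with
  | 0 => 0
  | k'.+1 => if p \in A then (mu p)%:R else Y p + bmax (psiR mu Y k') p
  end.

Lemma psiR_stable mu Y k : forall p, (#|below p| < k)%N ->
  forall m, (k <= m)%N -> psiR mu Y m p = psiR mu Y k p.
Proof.
elim: k => [//|k IH] p pk [//|m] km /=.
case: (p \in A) => //; congr (_ + _); rewrite /bmax; apply: eq_bigr => q qp.
apply: IH => //; apply: leq_trans (below_lt _ _ qp) _; by rewrite -ltnS.
Qed.

Definition Psi mu Y p := psiR mu Y #|P| p.

Lemma card_P_gt p : (#|below p| < #|P|)%N.
Proof.
rewrite -cardsT; apply: proper_card; apply/properP; split; first exact: subsetT.
by exists p; rewrite ?inE ?ltxx.
Qed.

Lemma Psi_A mu Y a : a \in A -> Psi mu Y a = (mu a)%:R.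
Proof.
move=> aA; rewrite /Psi; have := card_P_gt a.
by case: #|P| => [//|n] _ /=; rewrite aA.
Qed.

Lemma Psi_rec mu Y p : p \notin A -> Psi mu Y p = Y p + bmax (Psi mu Y) p.
Proof.
move=> pA; rewrite /Psi; have := card_P_gt p.
have -> : bmax (fun q => psiR mu Y #|P| q) p = bmax (fun q => psiR mu Y #|P|.-1 q) p.
  rewrite /bmax; apply: eq_bigr => q qp; apply: psiR_stable; last exact: leq_pred.
  have := below_lt _ _ qp; have := card_P_gt p; case: #|P| => [//|n] /= h1 h2.
  by apply: leq_trans h2 _; rewrite -ltnS.
by case: #|P| => [//|n] _ /=; rewrite (negbTE pA).
Qed.

Lemma psiR_ge0 mu Y k p : (forall q, q \notin A -> 0 <= Y q) -> 0 <= psiR mu Y k p.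
Proof.
move=> Y0; elim: k p => [//|k IH] p /=.
case pA: (p \in A) => //; rewrite addr_ge0 ?bmax_ge0 //; by rewrite Y0 ?pA.
Qed.

Lemma Psi_ge0 mu Y p : (forall q, q \notin A -> 0 <= Y q) -> 0 <= Psi mu Y p.
Proof. exact: psiR_ge0. Qed.

Lemma Psi_chain mu Y : (forall q, q \notin A -> 0 <= Y q) -> forall p, p \notin A ->
  exists b, exists s : seq P, [/\ b \in A, all (fun q => q \notin A) s,
    path (fun u v : P => (u < v)%O) b (rcons s p) &
    Psi mu Y p = (mu b)%:R + \sum_(q <- rcons s p) Y q].
Proof.
move=> Y0 p; move: {2}#|below p| (leqnn #|below p|) => n; elim: n p => [|n IH] p pn pA.
- have [b bA bp] := exists_below p pA.
  have := below_lt _ _ bp; by rewrite ltnNge (leq_trans pn).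
- have [b0 b0A b0p] := exists_below p pA.
  have [q qp qmax] := bmax_arg (Psi mu Y) p b0 b0p.
  rewrite Psi_rec // (bmax_eq _ _ _ qp (Psi_ge0 _ _ _ Y0) qmax).
  case qA: (q \in A).
  + exists q, [::]; split => //=; first by rewrite qp.
    by rewrite Psi_A // big_cons big_nil addr0 addrC.
  + have qn : (#|below q| <= n)%N by rewrite -ltnS (leq_trans (below_lt _ _ qp)).
    have [b [s [bA sA pth ->]]] := IH q qn (negbT qA).
    exists b, (rcons s q); split => //.
    all: try by rewrite all_rcons qA.
    all: try by rewrite rcons_path pth last_rcons.
    by rewrite (big_rcons _ p) /=; ring.
Qed.

Lemma Psi_inO mu Y : inC mu Y -> inO mu (Psi mu Y).
Proof.
move=> [Y0 HY]; split; first exact: Psi_A.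
move=> p q pq; case qA: (q \in A) => /=; rewrite ?orbF => pA.
- have [b [s [bA sA pth ->]]] := Psi_chain mu Y Y0 _ pA.
  rewrite Psi_A //; apply: (@le_trans _ _ ((mu b)%:R + ((mu q)%:R - (mu b)%:R))); last by rewrite addrC subrK.
  rewrite lerD2l; apply: HY => //.
  + by case: s {sA pth}.
  + by rewrite all_rcons pA.
  + by rewrite rcons_path pth last_rcons.
- rewrite (Psi_rec _ _ _ (negbT qA)) -[Psi mu Y p]add0r.
  by apply: lerD; [apply: Y0; rewrite qA | apply: le_bmax].
Qed.

Lemma phi_Psi mu Y p : p \notin A -> phi (Psi mu Y) p = Y p.
Proof. by move=> pA; rewrite /phi Psi_rec // addrK. Qed.
Lemma conv_O mu m (c : 'I_m -> R) (xs : 'I_m -> D -> R) :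
  (forall k, 0 <= c k) -> \sum_k c k = 1 ->
  (forall k, marked_order_polytope R A mu (xs k)) ->
  marked_order_polytope R A mu (fun i => \sum_k c k * xs k i).
Proof.
move=> c0 c1 H; split; [|split].
- move=> p q pq; apply: ler_sum => k _; apply: ler_wpM2l => //.
  by have [H1 _] := H k; apply: H1.
- move=> p a aA pa; have -> : (mu a)%:R = \sum_k c k * (mu a)%:R by rewrite -mulr_suml c1 mul1r.
  apply: ler_sum => k _; apply: ler_wpM2l => //.
  by have [_ [H2 _]] := H k; apply: H2.
- move=> p b bA bp; have -> : (mu b)%:R = \sum_k c k * (mu b)%:R by rewrite -mulr_suml c1 mul1r.
  apply: ler_sum => k _; apply: ler_wpM2l => //.
  by have [_ [_ H3]] := H k; apply: H3.
Qed.

Lemma conv_C mu m (c : 'I_m -> R) (xs : 'I_m -> D -> R) :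
  (forall k, 0 <= c k) -> \sum_k c k = 1 ->
  (forall k, marked_chain_polytope R A mu (xs k)) ->
  marked_chain_polytope R A mu (fun i => \sum_k c k * xs k i).
Proof.
move=> c0 c1 H; split.
- move=> p; apply: sumr_ge0 => k _; apply: mulr_ge0 => //.
  by have [H1 _] := H k; apply: H1.
- move=> a b s aA bA s0 pth; rewrite exchange_big /=.
  have -> : (mu a)%:R - (mu b)%:R = \sum_k c k * ((mu a)%:R - (mu b)%:R) by rewrite -mulr_suml c1 mul1r.
  apply: ler_sum => k _; rewrite -mulr_sumr; apply: ler_wpM2l => //.
  by have [_ H2] := H k; apply: H2.
Qed.

Lemma scale_O mu (n : nat) x : marked_order_polytope R A mu x ->
  marked_order_polytope R A (fun p => n * mu p)%N (fun i => n%:R * x i).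
Proof.
move=> [H1 [H2 H3]]; split; [|split].
- by move=> p q pq; apply: ler_wpM2l => //; apply: H1.
- by move=> p a aA pa; rewrite natrM; apply: ler_wpM2l => //; apply: H2.
- by move=> p b bA bp; rewrite natrM; apply: ler_wpM2l => //; apply: H3.
Qed.

Lemma scale_C mu (n : nat) x : marked_chain_polytope R A mu x ->
  marked_chain_polytope R A (fun p => n * mu p)%N (fun i => n%:R * x i).
Proof.
move=> [H1 H2]; split.
- by move=> p; apply: mulr_ge0 => //; apply: H1.
- move=> a b s aA bA s0 pth; rewrite -mulr_sumr !natrM -mulrBr.
  by apply: ler_wpM2l => //; apply: H2.
Qed.
Lemma inO_ext mu X Y : (forall p, X p = Y p) -> inO mu X -> inO mu Y.
Proof.
move=> E [H1 H2]; split; first by move=> a aA; rewrite -E H1.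
by move=> p q pq H; rewrite -!E; apply: H2.
Qed.

Lemma inC_ext mu X Y : (forall p, p \notin A -> X p = Y p) -> inC mu X -> inC mu Y.
Proof.
move=> E [H1 H2]; split; first by move=> p pA; rewrite -E // H1.
move=> a b s aA bA s0 sA pth.
have -> : \sum_(p <- s) Y p = \sum_(p <- s) X p.
  by apply: eq_big_seq => p ps; rewrite E // (allP sA).
by apply: H2.
Qed.

Lemma O_of_inO mu X : inO mu X ->
  marked_order_polytope R A mu (fun i => X (val i)).
Proof.
move=> HX; have [H1 _] := HX; apply/orderE; apply: inO_ext HX => p.
case pA: (p \in A).
  by rewrite ext_A // H1.
by rewrite -[p]/(val (Sub p (negbT pA) : D)) ext_val.
Qed.

Lemma C_of_inC mu Y : inC mu Y ->
  marked_chain_polytope R A mu (fun i => Y (val i)).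
Proof.
move=> HY; apply/chainE; apply: inC_ext HY => p pA.
by rewrite -[p]/(val (Sub p pA : D)) ext_val.
Qed.

Lemma hermite_inO mu n (W : P -> nat) k : (0 < n)%N -> (k < n)%N ->
  inO (fun p => n * mu p)%N (fun p => (W p)%:R) ->
  inO mu (fun p => ((W p + k) %/ n)%:R).
Proof.
move=> n0 kn [H1 H2]; split.
- move=> a aA; have /eqP := H1 a aA; rewrite eqr_nat => /eqP ->.
  by rewrite mulnC divnMDl // divn_small // addn0.
- move=> p q pq H; have := H2 p q pq H; rewrite !ler_nat => h.
  by apply: leq_div2r; rewrite leq_add2r.
Qed.

Lemma int_nat (v : int) : 0 <= (v%:~R : R) -> exists m : nat, v = m%:Z.
Proof. by rewrite ler0z; case: v => m // _; exists m. Qed.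

Lemma normal_back (Q : (D -> R) -> Prop) :
  (forall m (c : 'I_m -> R) (xs : 'I_m -> D -> R), (forall k, 0 <= c k) ->
     \sum_k c k = 1 -> (forall k, Q (xs k)) -> Q (fun i => \sum_k c k * xs k i)) ->
  forall n : nat, (0 < n)%N -> forall z : D -> int,
  (exists zs : 'I_n -> D -> int,
      (forall k, Q (fun i => (zs k i)%:~R)) /\ forall i, z i = \sum_(k < n) zs k i) ->
  (exists q : D -> R, Q q /\ forall i, (z i)%:~R = n%:R * q i).
Proof.
move=> Hc n n0 z [zs [Hzs Hz]].
have nz : (n%:R : R) != 0 by rewrite pnatr_eq0 -lt0n.
exists (fun i => \sum_k n%:R^-1 * (zs k i)%:~R); split.
- apply: Hc => //; first by move=> k; rewrite invr_ge0 ler0n.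
  by rewrite sumr_const card_ord -[n%:R^-1 *+ n]mulr_natl mulfV.
- move=> i; rewrite Hz -mulr_sumr mulrA mulfV // mul1r.
  by rewrite rmorph_sum.
Qed.

Lemma normal_O mu : normal_polytope (marked_order_polytope R A mu).
Proof.
move=> n n0 z; split; last first.
  move=> H; apply: (normal_back _ _ n n0 z H) => m c xs; exact: conv_O.
move=> [q [Hq Hz]].
have Hx : marked_order_polytope R A (fun p => n * mu p)%N (fun i => (z i)%:~R).
  have -> : (fun i => (z i)%:~R) = (fun i => n%:R * q i :> R).
    by apply: functional_extensionality => i; rewrite Hz.
  exact: scale_O.
move/orderE: Hx => Hx.
have X0 := inO_ge0 _ _ Hx.
have : forall p, exists w : nat, ext (fun p => n * mu p)%N (fun i => (z i)%:~R) p = w%:R.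
  move=> p; case pA: (p \in A); first by rewrite ext_A //; eexists.
  have := X0 p; rewrite -[p]/(val (Sub p (negbT pA) : D)) ext_val.
  by move=> /int_nat [w ->]; exists w.
move=> /fin_all_exists [W HW].
have HWO : inO (fun p => n * mu p)%N (fun p => (W p)%:R).
  by apply: inO_ext Hx => p; rewrite HW.
exists (fun k i => ((W (val i) + k) %/ n)%:Z); split.
- move=> k; apply: (O_of_inO mu (fun p => ((W p + k) %/ n)%N%:R)).
  by apply: hermite_inO.
- move=> i; rewrite -(big_morph _ PoszD (erefl (0:int))) hermite //; apply/eqP; rewrite -(eqr_int R).
  by rewrite -(ext_val (fun p => n * mu p)%N (fun i => (z i)%:~R)) HW.
Qed.
Lemma bmax_nat (F : P -> R) p : (forall q, exists m : nat, F q = m%:R) ->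
  exists m : nat, bmax F p = m%:R.
Proof.
move=> HF; rewrite /bmax; apply: (big_ind (fun v => exists m : nat, v = m%:R)).
- by exists 0%N.
- by move=> x y [m ->] [m' ->]; exists (Order.max m m'); rewrite natr_max.
- by move=> q _; apply: HF.
Qed.

Lemma psiR_nat mu Y : (forall p, p \notin A -> exists m : nat, Y p = m%:R) ->
  forall k p, exists m : nat, psiR mu Y k p = m%:R.
Proof.
move=> HY; elim=> [|k IH] p /=; first by exists 0%N.
case pA: (p \in A); first by eexists.
have [m1 ->] := HY p (negbT pA); have [m2 ->] := bmax_nat _ p IH.
by exists (m1 + m2)%N; rewrite natrD.
Qed.

Lemma phi_nat mu (W : P -> nat) p : inO mu (fun q => (W q)%:R) -> p \notin A ->
  exists m : nat, phi (fun q => (W q)%:R) p = m%:R.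
Proof.
move=> HW pA; have X0 := inO_ge0 _ _ HW.
have [b0 _ b0p] := exists_below p pA.
have [q qp qmax] := bmax_arg (fun q => (W q)%:R) p b0 b0p.
rewrite /phi (bmax_eq _ _ _ qp (X0 q) qmax).
have : (W q)%:R <= (W p)%:R :> R by case: HW => _ H2; apply: H2 => //; rewrite pA orbT.
rewrite ler_nat => h; exists (W p - W q)%N; by rewrite natrB.
Qed.

Lemma normal_C mu : normal_polytope (marked_chain_polytope R A mu).
Proof.
move=> n n0 z; split; last first.
  move=> H; apply: (normal_back _ _ n n0 z H) => m c xs; exact: conv_C.
move=> [q [Hq Hz]].
pose nmu := (fun p => n * mu p)%N.
have Hx : marked_chain_polytope R A nmu (fun i => (z i)%:~R).
  have -> : (fun i => (z i)%:~R) = (fun i => n%:R * q i :> R).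
    by apply: functional_extensionality => i; rewrite Hz.
  exact: scale_C.
move/chainE: Hx => Hx.
set Y := ext nmu _ in Hx.
have Ynat : forall p, p \notin A -> exists m : nat, Y p = m%:R.
  move=> p pA; have [Y0 _] := Hx; have := Y0 p pA.
  rewrite /Y -[p]/(val (Sub p pA : D)) ext_val.
  by move=> /int_nat [w ->]; exists w.
have HX := Psi_inO _ _ Hx.
have /fin_all_exists [W HW] := psiR_nat nmu Y Ynat #|P|.
have HWO : inO nmu (fun p => (W p)%:R) by apply: inO_ext HX => p; rewrite -HW.
pose Xk (k : 'I_n) := (fun p => ((W p + k) %/ n)%N%:R : R).
have HXk : forall k : 'I_n, inO mu (Xk k) by move=> k; apply: hermite_inO.
have : forall k : 'I_n, exists Z : D -> nat, forall i, phi (Xk k) (val i) = (Z i)%:R.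
  move=> k; suff H : forall i : D, exists m : nat, phi (Xk k) (val i) = m%:R by case: (fin_all_exists H) => Z HZ; exists Z.
  move=> i; exact: (phi_nat mu (fun p => ((W p + k) %/ n)%N) (val i) (HXk k) (valP i)).
move=> /fin_all_exists [Z HZ].
exists (fun k i => (Z k i)%:Z); split.
- move=> k; apply/chainE; apply: inC_ext (phi_inC _ _ (HXk k)) => p pA.
  by rewrite -[p]/(val (Sub p pA : D)) ext_val HZ.
- move=> i; apply/eqP; rewrite -(eqr_int R) rmorph_sum /=.
  rewrite (eq_bigr (fun k => phi (Xk k) (val i))); last by move=> k _; rewrite HZ.
  have pA := valP i.
  rewrite -(ext_val nmu (fun i => (z i)%:~R)) -/Y.
  rewrite -(phi_Psi nmu Y (val i) pA).
  have [b0 _ b0p] := exists_below _ pA.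
  have X0 := inO_ge0 _ _ HX.
  have [q' qp qmax] := bmax_arg (Psi nmu Y) _ b0 b0p.
  rewrite /phi (bmax_eq _ _ _ qp (X0 q') qmax).
  have Wmax : forall r, (r < val i)%O -> (W r <= W q')%N.
    by move=> r rp; rewrite -(ler_nat R) -!HW /Psi; apply: qmax.
  rewrite (eq_bigr (fun k => Xk k (val i) - Xk k q')); last first.
    move=> k _; rewrite (bmax_eq _ _ _ qp (inO_ge0 _ _ (HXk k) q')) // => r rp.
    by rewrite /Xk ler_nat; apply: leq_div2r; rewrite leq_add2r Wmax.
  rewrite sumrB /Xk -!natr_sum !hermite // /Psi !HW.
  by [].
Qed.
Definition conv (L : (D -> int) -> Prop) (v : D -> R) : Prop :=
  exists m, exists (c : 'I_m -> R) (zs : 'I_m -> D -> int),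
    [/\ forall k, 0 <= c k, \sum_k c k = 1, forall k, L (zs k) &
        forall i, v i = \sum_k c k * (zs k i)%:~R].

Lemma conv_pt L z : L z -> conv L (fun i => (z i)%:~R).
Proof.
move=> Lz; exists 1%N, (fun _ => 1), (fun _ => z); split => //.
  by rewrite big_ord1.
by move=> i; rewrite big_ord1 mul1r.
Qed.

Lemma conv_ext L v w : (forall i, v i = w i) -> conv L v -> conv L w.
Proof.
move=> E [m [c [zs [H1 H2 H3 H4]]]]; exists m, c, zs; split => // i.
by rewrite -E.
Qed.

Lemma conv_comb L t v1 v2 : 0 <= t -> t <= 1 -> conv L v1 -> conv L v2 ->
  conv L (fun i => t * v1 i + (1 - t) * v2 i).
Proof.
move=> t0 t1 [m1 [c1 [zs1 [H1 H2 H3 H4]]]] [m2 [c2 [zs2 [G1 G2 G3 G4]]]].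
have sl : forall j : 'I_m1, split (lshift m2 j) = inl j := fun j => unsplitK (inl _ j).
have sr : forall j : 'I_m2, split (rshift m1 j) = inr j := fun j => unsplitK (inr _ j).
exists (m1 + m2)%N.
exists (fun k => match split k with inl j => t * c1 j | inr j => (1 - t) * c2 j end).
exists (fun k => match split k with inl j => zs1 j | inr j => zs2 j end).
split.
- move=> k; case: (split k) => j; apply: mulr_ge0 => //; by rewrite ?subr_ge0.
- rewrite big_split_ord /=.
  under eq_bigr do rewrite sl.
  under [X in _ + X = _]eq_bigr do rewrite sr.
  by rewrite -!mulr_sumr H2 G2 !mulr1 addrC subrK.
- by move=> k; case: (split k).
- move=> i; rewrite big_split_ord /=.
  under eq_bigr do rewrite sl.
  under [X in _ = _ + X]eq_bigr do rewrite sr.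
  rewrite H4 G4 !mulr_sumr; congr (_ + _); apply: eq_bigr => j _; by rewrite mulrA.
Qed.
Definition Mx (mu : P -> nat) := (\max_(p : P) mu p)%N.

Lemma inO_leM mu X : inO mu X -> forall p, X p <= (Mx mu)%:R.
Proof.
move=> HX p; have [H1 H2] := HX.
case pA: (p \in A); first by rewrite H1 // ler_nat leq_bigmax.
have [a aA pa] := exists_above p (negbT pA).
apply: le_trans (H2 p a pa _) _; first by rewrite pA.
by rewrite H1 // ler_nat leq_bigmax.
Qed.

Definition isint mu (v : R) : bool := has (fun k : nat => v == k%:R) (iota 0 (Mx mu).+1).
Definition comono (X Y : P -> R) := forall q r, X q <= X r -> Y q <= Y r.
Definition meas mu (X : P -> R) := size (undup [seq X p | p <- enum P & ~~ isint mu (X p)]).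

Lemma isint_nat mu k : (k <= Mx mu)%N -> isint mu k%:R.
Proof. by move=> kM; apply/hasP; exists k => //; rewrite mem_iota. Qed.

Lemma base_case mu X : (forall p, isint mu (X p)) ->
  exists W : P -> nat, forall p, X p = (W p)%:R.
Proof.
move=> H.
have H' : forall p, exists w : nat, X p = w%:R by move=> p; have /hasP [k _ /eqP ->] := H p; exists k.
by case: (fin_all_exists H') => W HW; exists W.
Qed.

Lemma meas_lt mu X Y c p0 : X p0 = c -> ~~ isint mu c -> (forall q, Y q != c) ->
  (forall q, ~~ isint mu (Y q) -> exists q', Y q = X q') -> (meas mu Y < meas mu X)%N.
Proof.
move=> Xp0 cn Yc Ypre.
rewrite /meas; set S := undup [seq X p | p <- _ & _]; set T := undup [seq Y p | p <- _ & _].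
have cS : c \in S by rewrite mem_undup; apply/mapP; exists p0; rewrite ?Xp0 // mem_filter Xp0 cn mem_enum.
have Hsub : {subset T <= rem c S}.
  move=> v; rewrite mem_undup => /mapP [q]; rewrite mem_filter => /andP[qn _] ->.
  rewrite (mem_rem_uniq _ (undup_uniq _)) inE Yc /=.
  have [q' E] := Ypre q qn; rewrite mem_undup; apply/mapP; exists q'; by rewrite // mem_filter -E qn mem_enum inE.
have := uniq_leq_size (undup_uniq _) Hsub.
rewrite size_rem // => h.
have Spos : (0 < size S)%N by move: cS; case: (S).
by rewrite -(prednK Spos) ltnS.
Qed.
Lemma hull_ind mu (F : (P -> R) -> D -> R) (L : (D -> int) -> Prop)
  (Hbase : forall W : P -> nat, inO mu (fun p => (W p)%:R) -> conv L (F (fun p => (W p)%:R)))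
  (Haff : forall X X1 X2 t, inO mu X -> inO mu X1 -> inO mu X2 -> 0 <= t -> t <= 1 ->
      (forall p, X p = t * X1 p + (1 - t) * X2 p) -> comono X X1 -> comono X X2 ->
      forall i, F X i = t * F X1 i + (1 - t) * F X2 i) :
  forall X, inO mu X -> conv L (F X).
Proof.
move=> X; move: {2}(meas mu X) (leqnn (meas mu X)) => N; elim: N X => [|N IH] X hN HX.
all: case: (boolP [forall p, isint mu (X p)]) => [/forallP allint | /forallPn [p0 p0n]].
1,3: have [W HW] := base_case _ _ allint;
  have -> : X = (fun p => (W p)%:R) by apply: functional_extensionality.
1,2: by apply: Hbase; apply: inO_ext HX.
- have : X p0 \in undup [seq X p | p <- enum P & ~~ isint mu (X p)].
    by rewrite mem_undup; apply/mapP; exists p0; rewrite // mem_filter p0n mem_enum inE.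
  by move: hN; rewrite /meas leqn0 => /eqP/size0nil ->.
set c := X p0.
have X0 := inO_ge0 _ _ HX; have XM := inO_leM _ _ HX.
have cnk : forall k, (k <= Mx mu)%N -> c != k%:R.
  by move=> k kM; apply: contra p0n => /eqP E; rewrite -/c E; apply: isint_nat.
have c0 : 0 < c by rewrite lt_def X0 andbT; exact: (cnk 0%N (leq0n _)).
have cM : c < (Mx mu)%:R by rewrite lt_def eq_sym (cnk _ (leqnn _)) XM.
pose refs := [seq X q | q <- enum P] ++ [seq k%:R | k <- iota 0 (Mx mu).+1].
have refsE : forall v, v \in refs -> (exists q, v = X q) \/ isint mu v.
  move=> v; rewrite mem_cat => /orP[/mapP [q _ ->]|/mapP [k kin ->]]; first by left; exists q.
  by right; apply/hasP; exists k.
have refsX : forall q, X q \in refs by move=> q; rewrite mem_cat map_f ?mem_enum.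
have refsk : forall k, (k <= Mx mu)%N -> k%:R \in refs.
  by move=> k kM; rewrite mem_cat orbC map_f // mem_iota.
pose cp := \big[Num.min/(Mx mu)%:R]_(v <- refs | c < v) v.
pose cm := \big[Num.max/0]_(v <- refs | v < c) v.
have ccp : c < cp by apply: (big_ind (fun v => c < v)) => // x y; rewrite lt_min => -> ->.
have cpr : cp \in refs.
  rewrite /cp big_seq_cond; apply: (big_ind (fun v => v \in refs)).
  - exact: refsk.
  - by move=> x y xr yr; rewrite minEle; case: ifP.
  - by move=> i /andP[].
have cpmin : forall v, v \in refs -> c < v -> cp <= v.
  by move=> v vr cv; apply: (ge_bigmin_seq _ v (fun v => c < v) id).
have cmc : cm < c by apply: (big_ind (fun v => v < c)) => // x y; rewrite gt_max => -> ->.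
have cmr : cm \in refs.
  rewrite /cm big_seq_cond; apply: (big_ind (fun v => v \in refs)).
  - exact: (refsk 0%N).
  - by move=> x y xr yr; rewrite maxEle; case: ifP.
  - by move=> i /andP[].
have cmmax : forall v, v \in refs -> v < c -> v <= cm.
  by move=> v vr cv; apply: (le_bigmax_seq _ v (fun v => v < c) id).
pose Xp := fun q => if X q == c then cp else X q.
pose Xm := fun q => if X q == c then cm else X q.
have coP : comono X Xp.
  move=> q r; rewrite /Xp; case: eqP => [->|qc]; case: eqP => [->|rc] //.
  - by move=> cr; apply: cpmin (refsX r) _; rewrite lt_def cr andbT; apply/eqP.
  - by move=> qc'; apply: le_trans qc' (ltW ccp).
have coM : comono X Xm.
  move=> q r; rewrite /Xm; case: eqP => [->|qc]; case: eqP => [->|rc] //.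
  - by move=> cr; apply: le_trans (ltW cmc) cr.
  - by move=> qc'; apply: cmmax (refsX q) _; rewrite lt_def qc' andbT eq_sym; apply/eqP.
have inOco : forall Z, comono X Z -> (forall a, a \in A -> X a != c) ->
    (forall q, X q != c -> Z q = X q) -> inO mu Z.
  move=> Z coZ Ac ZX; have [H1 H2] := HX; split.
  - by move=> a aA; rewrite ZX ?Ac // H1.
  - by move=> p q pq H; apply: coZ; apply: H2.
have Ac : forall a, a \in A -> X a != c.
  by move=> a aA; have [H1 _] := HX; rewrite H1 // eq_sym cnk // leq_bigmax.
have HXp : inO mu Xp by apply: inOco => // q /negbTE qc; rewrite /Xp qc.
have HXm : inO mu Xm by apply: inOco => // q /negbTE qc; rewrite /Xm qc.
have mP : (meas mu Xp <= N)%N.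
  rewrite -ltnS; apply: leq_trans hN; apply: (meas_lt _ _ _ _ p0) => //.
  - by move=> q; rewrite /Xp /=; case: ifP => [_|/negbT //]; rewrite -/c gt_eqF.
  - move=> q; rewrite /Xp /=; case: ifP => _ cpn; last by exists q.
    by case: (refsE _ cpr) => // ci; rewrite ci in cpn.
have mM : (meas mu Xm <= N)%N.
  rewrite -ltnS; apply: leq_trans hN; apply: (meas_lt _ _ _ _ p0) => //.
  - by move=> q; rewrite /Xm /=; case: ifP => [_|/negbT //]; rewrite -/c lt_eqF.
  - move=> q; rewrite /Xm /=; case: ifP => _ cpn; last by exists q.
    by case: (refsE _ cmr) => // ci; rewrite ci in cpn.
have dpos : 0 < cp - cm by rewrite subr_gt0 (lt_trans cmc).
pose t := (c - cm) / (cp - cm).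
have t0 : 0 <= t by apply: divr_ge0; [rewrite subr_ge0; exact: ltW | exact: ltW].
have t1 : t <= 1 by rewrite ler_pdivrMr // mul1r lerD2r; exact: ltW.
have Ecomb : forall p, X p = t * Xp p + (1 - t) * Xm p.
  move=> p; rewrite /Xp /Xm /=; case: ifP => [/eqP ->|_]; last by ring.
  rewrite /t; field; by rewrite gt_eqF.
apply: (conv_ext L (fun i => t * F Xp i + (1 - t) * F Xm i)); last first.
  exact: (conv_comb _ _ _ _ t0 t1 (IH _ mP HXp) (IH _ mM HXm)).
by move=> i; rewrite (Haff X Xp Xm t).
Qed.
Lemma lattice_of_conv (Q : (D -> R) -> Prop) (Mb : nat) :
  (forall m (c : 'I_m -> R) (xs : 'I_m -> D -> R), (forall k, 0 <= c k) ->
     \sum_k c k = 1 -> (forall k, Q (xs k)) -> Q (fun i => \sum_k c k * xs k i)) ->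
  (forall z : D -> int, Q (fun i => (z i)%:~R) ->
     forall i, exists k : nat, (k <= Mb)%N /\ z i = k%:Z) ->
  (forall x, Q x -> conv (fun z => Q (fun i => (z i)%:~R)) x) ->
  lattice_polytope Q.
Proof.
move=> Hc Hb Hconv.
pose G := {ffun D -> 'I_Mb.+1}.
pose toZ (g : G) : D -> int := fun i => (g i : nat)%:Z.
pose decQ (g : G) : bool :=
  if excluded_middle_informative (Q (fun i => (toZ g i)%:~R)) then true else false.
have decQP : forall g, decQ g -> Q (fun i => (toZ g i)%:~R).
  by move=> g; rewrite /decQ; case: excluded_middle_informative.
have decQT : forall g, Q (fun i => (toZ g i)%:~R) -> decQ g.
  by move=> g Hg; rewrite /decQ; case: excluded_middle_informative.
pose fl := [seq g <- enum G | decQ g].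
pose g0 : G := [ffun=> ord0].
exists (map toZ fl) => x; split.
- move=> /Hconv [m [c [zs [c0 c1 Lz Hx]]]].
  have gex : forall k, exists g : G, (forall i, toZ g i = zs k i) /\ g \in fl.
    move=> k; exists [ffun i => inord `|zs k i|%N].
    have E : forall i, toZ [ffun i => inord `|zs k i|%N] i = zs k i.
      move=> i; rewrite /toZ ffunE /=; have [kk [kM ->]] := Hb _ (Lz k) i.
      by rewrite /= inordK ?ltnS.
    split => //; rewrite mem_filter mem_enum andbT; apply: decQT.
    have -> : (fun i => (toZ [ffun i => inord `|zs k i|%N] i)%:~R) = (fun i => (zs k i)%:~R :> R).
      by apply: functional_extensionality => i; rewrite E.
    exact: Lz.
  have [gs Hgs] := fin_all_exists gex.
  have idxP : forall k, (index (gs k) fl < size (map toZ fl))%N.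
    by move=> k; rewrite size_map index_mem; case: (Hgs k).
  pose idx k : 'I_(size (map toZ fl)) := Ordinal (idxP k).
  exists (fun j => \sum_(k | idx k == j) c k); split; [|split].
  + by move=> j; apply: sumr_ge0 => k _; apply: c0.
  + by rewrite -c1 (partition_big idx predT).
  + move=> i; rewrite Hx (partition_big idx predT) //=.
    apply: eq_bigr => j _; rewrite mulr_suml; apply: eq_bigr => k /eqP <-.
    congr (_ * _); rewrite /= (nth_map g0); last by rewrite -(size_map toZ); apply: idxP.
    by case: (Hgs k) => E kin; rewrite nth_index // E.
- move=> [c [c0 [c1 Hx]]].
  have -> : x = (fun i => \sum_k c k * ((nth (fun=> 0) (map toZ fl) k i)%:~R)).
    by apply: functional_extensionality => i; rewrite Hx.
  apply: Hc => // j.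
  have jlt : (j < size fl)%N by rewrite -(size_map toZ); apply: ltn_ord.
  have -> : (fun i => (nth (fun=> 0) (map toZ fl) j i)%:~R) = (fun i => (toZ (nth g0 fl j) i)%:~R :> R).
    by apply: functional_extensionality => i; rewrite (nth_map g0).
  apply: decQP; have := mem_nth g0 jlt; rewrite mem_filter => /andP[] //.
Qed.
Lemma lattice_O mu : lattice_polytope (marked_order_polytope R A mu).
Proof.
apply: (lattice_of_conv _ (Mx mu)).
- by move=> m c xs; apply: conv_O.
- move=> z /orderE Hz i.
  have := inO_ge0 _ _ Hz (val i); have := inO_leM _ _ Hz (val i).
  rewrite !ext_val => hM /int_nat [kk Ek]; exists kk; split => //.
  by move: hM; rewrite Ek ler_nat.
- move=> x /orderE Hx.
  pose L := fun z : D -> int => marked_order_polytope R A mu (fun i => (z i)%:~R).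
  apply: (conv_ext L (fun i => ext mu x (val i))); first by move=> i; rewrite ext_val.
  apply: (hull_ind mu (fun X i => X (val i)) L _ _ _ Hx).
  + move=> W HW; apply: (conv_pt L (fun i => (W (val i))%:Z)).
    exact: (O_of_inO mu (fun p => (W p)%:R) HW).
  + by move=> X X1 X2 t _ _ _ _ _ E _ _ i; rewrite E.
Qed.

Lemma lattice_C mu : lattice_polytope (marked_chain_polytope R A mu).
Proof.
apply: (lattice_of_conv _ (Mx mu)).
- by move=> m c xs; apply: conv_C.
- move=> z [H1 H2] i.
  have [kk Ek] := int_nat _ (H1 i); exists kk; split => //.
  have [b bA bp] := exists_below _ (valP i).
  have [a aA pa] := exists_above _ (valP i).
  have := H2 a b [:: i] aA bA isT; rewrite /= bp pa big_seq1 Ek => /(_ isT) h.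
  rewrite -(ler_nat R); apply: le_trans h _.
  rewrite lerBlDr; apply: (@le_trans _ _ (Mx mu)%:R); first by rewrite ler_nat leq_bigmax.
  by rewrite lerDl.
- move=> x /chainE Hx.
  pose L := fun z : D -> int => marked_chain_polytope R A mu (fun i => (z i)%:~R).
  have HX := Psi_inO _ _ Hx.
  apply: (conv_ext L (fun i => phi (Psi mu (ext mu x)) (val i))).
    by move=> i; rewrite phi_Psi ?ext_val // (valP i).
  apply: (hull_ind mu (fun X i => phi X (val i)) L _ _ _ HX).
  + move=> W HW.
    have : forall i : D, exists m : nat, phi (fun p => (W p)%:R) (val i) = m%:R.
      by move=> i; apply: phi_nat HW (valP i).
    move=> /fin_all_exists [Z HZ].
    apply: (conv_ext L (fun i => ((Z i)%:Z)%:~R)); first by move=> i; rewrite HZ.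
    apply: conv_pt; rewrite /L.
    have -> : (fun i => ((Z i)%:Z)%:~R) = (fun i => phi (fun p => (W p)%:R) (val i) :> R).
      by apply: functional_extensionality => i; rewrite HZ.
    apply: (C_of_inC mu (fun p => phi (fun p => (W p)%:R) p) (phi_inC _ _ HW)).
  + move=> X X1 X2 t HX0 HX1 HX2 _ _ E co1 co2 i.
    have pA := valP i.
    have [b0 _ b0p] := exists_below _ pA.
    have [q qp qmax] := bmax_arg X _ b0 b0p.
    rewrite /phi (bmax_eq _ _ _ qp (inO_ge0 _ _ HX0 q) qmax).
    rewrite (bmax_eq _ _ _ qp (inO_ge0 _ _ HX1 q)); last by move=> r rp; apply: co1; apply: qmax.
    rewrite (bmax_eq _ _ _ qp (inO_ge0 _ _ HX2 q)); last by move=> r rp; apply: co2; apply: qmax.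
    rewrite !E; ring.
Qed.
End Main.

Theorem corollary2p3 (R : realFieldType) (disp : Order.disp_t)
    (P : finPOrderType disp) (A : {set P}) (lam : P -> nat) :
  marked_set A ->
  (lattice_polytope (marked_order_polytope R A lam) /\
   normal_polytope (marked_order_polytope R A lam)) /\
  (lattice_polytope (marked_chain_polytope R A lam) /\
   normal_polytope (marked_chain_polytope R A lam)).
Proof.
move=> HA; split; split.
- exact: lattice_O.
- exact: normal_O.
- exact: lattice_C.
- exact: normal_C.
Qed.
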